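(* The class $\mathrm{Age}(C_3[I_\omega]^* )$ has the expansion property relative to $\mathrm{Age}(C_3[I_\omega])$, where $C_3[I_\omega]$ is the reduct of $C_3[I_\omega]^*$ to $\{E\}$.
   Context: Expansion property: let $L\subseteq L^*$ be relational languages, $\mathcal K$ a class of finite $L$-structures and $\mathcal K^*$ a class of finite $L^*$-structures whose $L$-reducts lie in $\mathcal K$. $\mathcal K^*$ has the expansion property relative to $\mathcal K$ if for every $\mathbf A\in\mathcal K$ there is $\mathbf B\in\mathcal K$ such that for all $\mathbf A^*,\mathbf B^*\in\mathcal K^*$ whose $L$-reducts are $\mathbf A$ and $\mathbf B$ respectively, $\mathbf A^*$ embeds into $\mathbf B^*$. The age of a structure is the class of finite structures embeddable in it. $C_3$ is the directed 3-cycle on $[3]=\{0,1,2\}$ with edges $(0,1),(1,2),(2,0)$. Fix a linear order $\prec$ on $\mathbb N$ with $(\mathbb N,\prec)\cong(\mathbb Q,<)$. $C_3[I_\omega]^*$ is the structure with universe $[3]\times\mathbb N$ in the language $\{E,P_0,P_1,P_2,<\}$ where $E((i,a),(j,b))$ iff $(i,j)$ is an edge of $C_3$; $P_i=\{i\}\times\mathbb N$; and $(i,a)<(j,b)$ iff $i<j$, or $i=j$ and $a\prec b$. *)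

(* Defs.v *)
From HB Require Import structures.
From mathcomp Require Import all_boot all_order all_algebra.
Set Implicit Arguments. Unset Strict Implicit. Unset Printing Implicit Defensive.
Import Order.TTheory GRing.Theory Num.Theory.

Record Lstr : Type := { Lcar : finType; LE : rel Lcar }.

Definition L_emb (A B : Type) (EA : rel A) (EB : rel B) (f : A -> B) : Prop :=
  injective f /\ forall x y, EB (f x) (f y) = EA x y.

Definition S_emb (A B : Type) (EA : rel A) (PA : 'I_3 -> pred A) (ltA : rel A)
  (EB : rel B) (PB : 'I_3 -> pred B) (ltB : rel B) (f : A -> B) : Prop :=
  [/\ injective f,
      forall x y, EB (f x) (f y) = EA x y,
      forall i x, PB i (f x) = PA i x
    & forall x y, ltB (f x) (f y) = ltA x y].

Definition C3E : rel ('I_3 * nat) :=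
  fun x y => (nat_of_ord y.1 == (nat_of_ord x.1).+1 %% 3)%N.
Definition C3P : 'I_3 -> pred ('I_3 * nat) := fun i x => x.1 == i.
Definition C3lt (prec : rel nat) : rel ('I_3 * nat) :=
  fun x y => ((nat_of_ord x.1 < nat_of_ord y.1)%N ||
              ((x.1 == y.1) && prec x.2 y.2)).

Definition iso_to_Q (prec : rel nat) : Prop :=
  exists f : nat -> rat, bijective f /\ forall a b, prec a b = (f a < f b)%R.

Definition in_AgeL (A : Lstr) : Prop :=
  exists f : Lcar A -> 'I_3 * nat, L_emb (@LE A) C3E f.

Definition in_AgeS (prec : rel nat) (A : Lstr) (P : 'I_3 -> pred (Lcar A))
  (ltr : rel (Lcar A)) : Prop :=
  exists f : Lcar A -> 'I_3 * nat, S_emb (@LE A) P ltr C3E C3P (C3lt prec) f.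

(* An L^*-structure whose L-reduct is A is given as A together with
   interpretations of P_0,P_1,P_2 and < on the universe of A. *)
Definition expansion_property (prec : rel nat) : Prop :=
  forall A : Lstr, in_AgeL A ->
  exists2 B : Lstr, in_AgeL B &
  forall (PA : 'I_3 -> pred (Lcar A)) (ltA : rel (Lcar A))
         (PB : 'I_3 -> pred (Lcar B)) (ltB : rel (Lcar B)),
    in_AgeS prec PA ltA -> in_AgeS prec PB ltB ->
    exists g : Lcar A -> Lcar B, S_emb (@LE A) PA ltA (@LE B) PB ltB g.

(* Main.v *)
Require Import Defs.
From HB Require Import structures.
From mathcomp Require Import all_boot all_order all_algebra.

Lemma chain_emb (T U : finType) (PS : pred T) (PV : pred U) (r : rel T) (s : rel U) (u0 : U) :
  irreflexive r -> transitive r -> irreflexive s -> transitive s ->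
  {in PS &, forall x y, x != y -> r x y || r y x} ->
  {in PV &, forall x y, x != y -> s x y || s y x} ->
  (#|PS| <= #|PV|)%N ->
  exists h : T -> U, (forall x, PS x -> PV (h x)) /\
    (forall x y, PS x -> PS y -> s (h x) (h y) = r x y).
Proof.
move=> rirr rtr sirr str rtot stot hc.
pose rle := fun a b => (a == b) || r a b.
pose sle := fun a b => (a == b) || s a b.
have rletr : transitive rle.
  move=> b a c /orP[/eqP->//|hab] /orP[/eqP<-|hbc]; rewrite /rle ?hab ?orbT //.
  by rewrite (rtr _ _ _ hab hbc) orbT.
have sletr : transitive sle.
  move=> b a c /orP[/eqP->//|hab] /orP[/eqP<-|hbc]; rewrite /sle ?hab ?orbT //.
  by rewrite (str _ _ _ hab hbc) orbT.
pose sS := sort rle (enum PS).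
pose sV := sort sle (enum PV).
have sSs : sorted rle sS.
  apply: (@sort_sorted_in _ PS); last by apply/allP=> x; rewrite mem_enum.
  move=> x y hx hy; case: (eqVneq x y) => [->|nxy]; first by rewrite /rle eqxx.
  rewrite /rle (negbTE nxy) eq_sym (negbTE nxy) /=; exact: rtot.
have sVs : sorted sle sV.
  apply: (@sort_sorted_in _ PV); last by apply/allP=> x; rewrite mem_enum.
  move=> x y hx hy; case: (eqVneq x y) => [->|nxy]; first by rewrite /sle eqxx.
  rewrite /sle (negbTE nxy) eq_sym (negbTE nxy) /=; exact: stot.
have uS : uniq sS by rewrite sort_uniq enum_uniq.
have uV : uniq sV by rewrite sort_uniq enum_uniq.
have szS : size sS = #|PS| by rewrite size_sort cardE.
have szV : size sV = #|PV| by rewrite size_sort cardE.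
have inS : forall x, PS x -> x \in sS by move=> x hx; rewrite mem_sort mem_enum.
exists (fun x => nth u0 sV (index x sS)); split.
  move=> x hx; have : nth u0 sV (index x sS) \in sV.
    apply: mem_nth; rewrite szV; apply: leq_trans hc; rewrite -szS index_mem; exact: inS.
  by rewrite mem_sort mem_enum.
have ltS : forall x, PS x -> (index x sS < size sV)%N.
  by move=> x hx; rewrite szV; apply: leq_trans hc; rewrite -szS index_mem; exact: inS.
have asr : forall a b, r a b -> r b a = false.
  by move=> a b hab; apply/negbTE/negP=> hba; have := rtr _ _ _ hab hba; rewrite rirr.
have ass : forall a b, s a b -> s b a = false.
  by move=> a b hab; apply/negbTE/negP=> hba; have := str _ _ _ hab hba; rewrite sirr.
have key : forall x y, PS x -> PS y -> (index x sS < index y sS)%N ->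
    r x y /\ s (nth u0 sV (index x sS)) (nth u0 sV (index y sS)).
  move=> x y hx hy hij.
  have hxs := inS _ hx; have hys := inS _ hy.
  split.
    have := sorted_ltn_nth rletr x sSs; move=> /(_ (index x sS) (index y sS)).
    rewrite !inE !index_mem hxs hys !nth_index // => /(_ isT isT hij).
    case/orP=> // /eqP exy; move: hij; by rewrite exy ltnn.
  have := sorted_ltn_nth sletr u0 sVs; move=> /(_ (index x sS) (index y sS)).
  rewrite !inE !ltS // => /(_ isT isT hij).
  case/orP=> // /eqP; move/eqP; rewrite nth_uniq ?ltS // => /eqP exy.
  by move: hij; rewrite exy ltnn.
move=> x y hx hy.
case: (ltngtP (index x sS) (index y sS)) => hij.
- by have [-> ->] := key x y hx hy hij.
- have [h1 h2] := key y x hy hx hij; by rewrite (asr _ _ h1) (ass _ _ h2).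
- have exy : x = y by rewrite -(nth_index x (inS _ hx)) hij nth_index // inS.
  by rewrite exy rirr sirr.
Qed.

From mathcomp Require Import zify.
Import Order.TTheory GRing.Theory Num.Theory.

Theorem theorem5p6 (prec : rel nat) (hprec : iso_to_Q prec) :
  expansion_property prec.
Proof.
have [fq [[fqi fqK fKq] hfq]] := hprec.
have pirr : forall a, prec a a = false by move=> a; rewrite hfq ltxx.
have ptr : forall a b c, prec a b -> prec b c -> prec a c.
  by move=> a b c; rewrite !hfq; apply: lt_trans.
have ptot : forall a b, a != b -> prec a b || prec b a.
  move=> a b nab; rewrite !hfq; apply: lt_total.
  by apply: contra nab => /eqP/(can_inj fqK) ->.
move=> A _.
pose n := #|Lcar A|.+1.
pose B := {| Lcar := ('I_3 * 'I_n)%type;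
             LE := fun b b' : 'I_3 * 'I_n => C3E (b.1, val b.2) (b'.1, val b'.2) |}.
exists B.
  exists (fun b : 'I_3 * 'I_n => (b.1, val b.2)); split => //.
  by move=> [x1 x2] [y1 y2] [-> /val_inj ->].
move=> PA ltA PB ltB [fA [iA eA pA lA]] [fB [iB eB pB lB]].
pose p a := (fA a).1.
pose q b := (fB b).1.
pose nx (k : 'I_3) : 'I_3 := inord ((val k).+1 %% 3).
have nxv : forall k, val (nx k) = (val k).+1 %% 3.
  by move=> k; rewrite /nx /= inordK // ltn_pmod.
have edge : forall b : 'I_3 * 'I_n,
    val (q (nx b.1, ord0)) = (val (q b)).+1 %% 3.
  move=> b; have := eB b (nx b.1, ord0); rewrite /= /C3E /= nxv eqxx.
  by move/eqP.
pose Q k := q (k, ord0).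
have qQ : forall b : 'I_3 * 'I_n, q b = Q b.1.
  move=> b; apply: val_inj; have h1 := edge b; have h2 := edge (b.1, ord0).
  rewrite /= in h1 h2 *; rewrite /Q; have := ltn_ord (q b); have := ltn_ord (q (b.1, ord0)).
  rewrite /= in h1 h2 *; lia.
have Qv : forall k, val (Q k) = (val k + val (Q ord0)) %% 3.
  have hn : forall k, val (Q (nx k)) = (val (Q k)).+1 %% 3 by move=> k; exact: (edge (k, ord0)).
  have e1 : nx ord0 = Ordinal (isT : 1 < 3) by apply: val_inj; rewrite nxv.
  have e2 : nx (nx ord0) = Ordinal (isT : 2 < 3) by apply: val_inj; rewrite !nxv.
  have := ltn_ord (Q ord0).
  move=> hQ [[|[|[|m]]] hk] //=.
  - have -> : Ordinal hk = ord0 by apply: val_inj.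
    by rewrite add0n modn_small.
  - have -> : Ordinal hk = nx ord0 by apply: val_inj; rewrite nxv.
    by rewrite hn add1n.
  - have -> : Ordinal hk = nx (nx ord0) by apply: val_inj; rewrite !nxv.
    rewrite !hn /=; lia.
have bigB : forall j : 'I_3, (#|Lcar A| < #|[pred b : Lcar B | q b == j]|)%N.
  move=> j.
  pose k : 'I_3 := inord ((val j + 2 * val (Q ord0)) %% 3).
  have Qk : Q k = j.
    apply: val_inj; rewrite /= Qv /k /= inordK ?ltn_pmod //.
    have := ltn_ord j; have := ltn_ord (Q ord0); lia.
  have -> : #|Lcar A|.+1 = #|[set (k, i) | i : 'I_n]|.
    by rewrite card_imset ?card_ord // => x y [].
  apply: subset_leq_card; apply/subsetP => b /imsetP [i _ ->].
  by rewrite inE qQ /= Qk.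
pose r (a a' : Lcar A) := prec (fA a).2 (fA a').2.
pose sr (b b' : Lcar B) := prec (fB b).2 (fB b').2.
have rirr : irreflexive r by move=> a; exact: pirr.
have sirr : irreflexive sr by move=> a; exact: pirr.
have rtr : transitive r by move=> b a c; exact: ptr.
have str : transitive sr by move=> b a c; exact: ptr.
have ex : forall j : 'I_3, exists h : Lcar A -> Lcar B,
    (forall x, (p x == j) -> (q (h x) == j)) /\
    (forall x y, p x == j -> p y == j -> sr (h x) (h y) = r x y).
  move=> j.
  apply: (@chain_emb _ _ [pred a | p a == j] [pred b | q b == j] r sr (ord0, ord0)) => //.
  - move=> x y; rewrite !inE => /eqP hx /eqP hy nxy; apply: ptot.
    apply: contra nxy => /eqP e2; apply/eqP/iA.
    by rewrite [fA x]surjective_pairing [fA y]surjective_pairing -/(p x) -/(p y) hx hy e2.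
  - move=> x y; rewrite !inE => /eqP hx /eqP hy nxy; apply: ptot.
    apply: contra nxy => /eqP e2; apply/eqP/iB.
    by rewrite [fB x]surjective_pairing [fB y]surjective_pairing -/(q x) -/(q y) hx hy e2.
  - apply: leq_trans (max_card _) _; exact: ltnW (bigB j).
have [h hh] := fin_all_exists ex.
pose g a := h (p a) a.
have qg : forall a, q (g a) = p a by move=> a; apply/eqP; apply: (hh (p a)).1.
have og : forall a a', p a = p a' -> sr (g a) (g a') = r a a'.
  by move=> a a' e; rewrite /g e; apply: (hh (p a')).2; rewrite ?e.
exists g; split.
- move=> a a' e.
  have ep : p a = p a' by rewrite -!qg e.
  apply/eqP; apply/negP=> /negP nxy.
  have n2 : (fA a).2 != (fA a').2.
    apply: contra nxy => /eqP e2; apply/eqP/iA.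
    by rewrite [fA a]surjective_pairing [fA a']surjective_pairing -/(p a) -/(p a') ep e2.
  have := ptot _ _ n2; rewrite -/(r a a') -/(r a' a) -og // -og // e.
  by rewrite sirr.
- move=> x y; rewrite -eB -eA /C3E -/(q (g x)) -/(q (g y)) !qg.
  by [].
- by move=> i x; rewrite -pB -pA /C3P -/(q (g x)) qg.
- move=> x y; rewrite -lB -lA /C3lt -/(q (g x)) -/(q (g y)) !qg -/(p x) -/(p y).
  case: (eqVneq (p x) (p y)) => e; rewrite ?andbF ?andbT //=.
  by rewrite -/(sr _ _) og.
Qed.
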